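(* Let $R$ and $S$ be commutative rings with identity, $f:R\to S$ a ring homomorphism, and $J$ a nonzero proper ideal of $S$. Let $\mathfrak{p}$ and $\{\mathfrak{p}_\alpha\}_{\alpha\in\Lambda}$ be prime ideals of $R$, and $\mathfrak{q}$ and $\{\mathfrak{q}_\alpha\}_{\alpha\in\Lambda}$ be prime ideals of $S$ not containing $J$. Then: (1) $\bigcap_{\alpha\in\Lambda}\mathfrak{p}_\alpha\subseteq\mathfrak{p}$ if and only if $\bigcap_{\alpha\in\Lambda}\mathfrak{p}_\alpha^{\prime_f}\subseteq\mathfrak{p}^{\prime_f}$. (2) $\bigcap_{\alpha\in\Lambda}\mathfrak{p}_\alpha\supseteq\mathfrak{p}$ if and only if $\bigcap_{\alpha\in\Lambda}\mathfrak{p}_\alpha^{\prime_f}\supseteq\mathfrak{p}^{\prime_f}$. (3) $\bigcap_{\alpha\in\Lambda}\mathfrak{q}_\alpha\subseteq\mathfrak{q}$ if and only if $\bigcap_{\alpha\in\Lambda}\overline{\mathfrak{q}_\alpha}^f\subseteq\overline{\mathfrak{q}}^f$. (4) If $\bigcap_{\alpha\in\Lambda}\mathfrak{q}_\alpha\supseteq\mathfrak{q}$, then $\bigcap_{\alpha\in\Lambda}\overline{\mathfrak{q}_\alpha}^f\supseteq\overline{\mathfrak{q}}^f$. The converse holds if either $f$ is surjective or $\operatorname{Spec}(S)\setminus V(J)$ is compactly packed. (5) $\bigcap_{\alpha\in\Lambda}\overline{\mathfrak{q}_\alpha}^f\subseteq\mathfrak{p}^{\prime_f}$ if and only if $f^{-1}\big(\bigcap_{\alpha\in\Lambda}\mathfrak{q}_\alpha+J\big)\subseteq\mathfrak{p}$.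 (6) $\bigcap_{\alpha\in\Lambda}\mathfrak{p}_\alpha^{\prime_f}\not\subseteq\overline{\mathfrak{q}}^f$.
   Context: $R\bowtie^f J:=\{(r,f(r)+j)\mid r\in R,\ j\in J\}$, a subring of $R\times S$. For a prime ideal $\mathfrak{p}$ of $R$, $\mathfrak{p}^{\prime_f}:=\{(p,f(p)+j)\mid p\in\mathfrak{p},\ j\in J\}$; for a prime ideal $\mathfrak{q}$ of $S$ with $J\not\subseteq\mathfrak{q}$, $\overline{\mathfrak{q}}^f:=\{(r,f(r)+j)\mid r\in R,\ j\in J,\ f(r)+j\in\mathfrak{q}\}$; both are prime ideals of $R\bowtie^f J$. $V(J)$ is the set of prime ideals of $S$ containing $J$. A subset $X\subseteq\operatorname{Spec}(S)$ is compactly packed if whenever an ideal $I$ of $S$ is contained in the union of a family $\{\mathfrak{q}_i\}_i$ of elements of $X$, then $I\subseteq\mathfrak{q}_i$ for some $i$. *)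

(* Defs.v *)
From mathcomp Require Import all_boot all_order all_algebra.
Set Implicit Arguments. Unset Strict Implicit. Unset Printing Implicit Defensive.
Import GRing.Theory.
Local Open Scope ring_scope.

Definition incl {T : Type} (A B : T -> Prop) : Prop := forall x, A x -> B x.

Definition is_ideal (R : comPzRingType) (I : R -> Prop) : Prop :=
  [/\ I 0, (forall x y, I x -> I y -> I (x - y)) & (forall r x, I x -> I (r * x))].

Definition is_prime (R : comPzRingType) (I : R -> Prop) : Prop :=
  [/\ is_ideal I, ~ I 1 & (forall a b, I (a * b) -> I a \/ I b)].

(* R ⋈^f J = {(r, f r + j) | r in R, j in J}, as a incl of R × S *)
Definition amalg (R S : comPzRingType) (f : {rmorphism R -> S}) (J : S -> Prop)
  : R * S -> Prop :=
  fun x => exists r j, J j /\ x = (r, f r + j).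

(* p^{'_f} = {(p, f p + j) | p in p, j in J} *)
Definition prime_lift (R S : comPzRingType) (f : {rmorphism R -> S}) (J : S -> Prop)
  (p : R -> Prop) : R * S -> Prop :=
  fun x => exists a j, p a /\ J j /\ x = (a, f a + j).

(* \overline{q}^f = {(r, f r + j) | r in R, j in J, f r + j in q} *)
Definition prime_bar (R S : comPzRingType) (f : {rmorphism R -> S}) (J : S -> Prop)
  (q : S -> Prop) : R * S -> Prop :=
  fun x => exists r j, J j /\ q (f r + j) /\ x = (r, f r + j).

(* Intersection of a family of subsets of R ⋈^f J, taken inside R ⋈^f J
   (so the empty intersection is the whole ring R ⋈^f J). *)
Definition amalg_bigcap (R S : comPzRingType) (f : {rmorphism R -> S}) (J : S -> Prop)
  (L : Type) (P : L -> R * S -> Prop) : R * S -> Prop :=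
  fun x => amalg f J x /\ forall a, P a x.

Definition bigcap {T : Type} (L : Type) (P : L -> T -> Prop) : T -> Prop :=
  fun x => forall a, P a x.

Definition ideal_add (S : comPzRingType) (I K : S -> Prop) : S -> Prop :=
  fun x => exists a b, I a /\ K b /\ x = a + b.

Definition preim_set {A B : Type} (f : A -> B) (X : B -> Prop) : A -> Prop :=
  fun x => X (f x).

Definition compactly_packed (S : comPzRingType) (X : (S -> Prop) -> Prop) : Prop :=
  forall (I : S -> Prop) (L : Type) (qs : L -> S -> Prop),
    is_ideal I -> (forall i, X (qs i)) ->
    incl I (fun x => exists i, qs i x) -> exists i, incl I (qs i).

Definition spec_minus_V (S : comPzRingType) (J : S -> Prop) : (S -> Prop) -> Prop :=
  fun q => is_prime q /\ ~ incl J q.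

(* Main.v *)
Require Import Defs.
From mathcomp Require Import all_boot all_order all_algebra.
Local Open Scope ring_scope.
Import GRing.Theory.
From Stdlib Require Import Classical.

Lemma idN (R : comPzRingType) (I : R -> Prop) x : is_ideal I -> I x -> I (- x).
Proof. case=> I0 IB _ Ix; rewrite -sub0r; exact: IB. Qed.

Lemma idD (R : comPzRingType) (I : R -> Prop) x y : is_ideal I -> I x -> I y -> I (x + y).
Proof. move=> hI Ix Iy; have [_ IB _] := hI; rewrite -(opprK y); apply: IB => //; exact: idN. Qed.

Lemma idM (R : comPzRingType) (I : R -> Prop) x r : is_ideal I -> I x -> I (x * r).
Proof. case=> _ _ IM Ix; rewrite mulrC; exact: IM. Qed.

Lemma id0 (R : comPzRingType) (I : R -> Prop) : is_ideal I -> I 0.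
Proof. by case. Qed.

Lemma nincl_ex (S : Type) (J q : S -> Prop) : ~ incl J q -> exists j, J j /\ ~ q j.
Proof.
move=> h; apply: NNPP => hn; apply: h => x Jx.
apply: NNPP => nq; apply: hn; by exists x.
Qed.

Arguments idN {R I x}.
Arguments idD {R I x y}.
Arguments idM {R I x r}.
Arguments id0 {R I}.
Arguments nincl_ex {S J q}.

Theorem lemma2p3 (R S : comPzRingType) (f : {rmorphism R -> S}) (J : S -> Prop)
  (L : Type) (p : R -> Prop) (ps : L -> R -> Prop)
  (q : S -> Prop) (qs : L -> S -> Prop) :
  is_ideal J -> (exists j, J j /\ j <> 0) -> ~ J 1 ->
  is_prime p -> (forall a, is_prime (ps a)) ->
  is_prime q -> ~ incl J q ->
  (forall a, is_prime (qs a) /\ ~ incl J (qs a)) ->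
  ( (* (1) *)
     (
      incl (bigcap ps) p <->
        incl (amalg_bigcap f J (fun a => prime_lift f J (ps a))) (prime_lift f J p)) /\
      (* (2) *) (
      incl p (bigcap ps) <->
        incl (prime_lift f J p) (amalg_bigcap f J (fun a => prime_lift f J (ps a)))) /\
      (* (3) *) (
      incl (bigcap qs) q <->
        incl (amalg_bigcap f J (fun a => prime_bar f J (qs a))) (prime_bar f J q)) /\
      (* (4) *)
      ((incl q (bigcap qs) ->
        incl (prime_bar f J q) (amalg_bigcap f J (fun a => prime_bar f J (qs a))))
      /\ ((forall s : S, exists r : R, f r = s) \/ compactly_packed (spec_minus_V J) ->
          incl (prime_bar f J q) (amalg_bigcap f J (fun a => prime_bar f J (qs a))) ->
          incl q (bigcap qs))) /\
      (* (5) *)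
      (incl (amalg_bigcap f J (fun a => prime_bar f J (qs a))) (prime_lift f J p) <->
        incl (preim_set f (ideal_add (bigcap qs) J)) p) /\
      (* (6) *)
      ~ incl (amalg_bigcap f J (fun a => prime_lift f J (ps a))) (prime_bar f J q)).
Proof.
move=> hJ _ _ [hp _ _] hps [hq _ qpr] nJq hqs.
have [j0 [Jj0 nqj0]] := nincl_ex nJq.
have J0 := id0 hJ.
split; [split | split; [split | split; [split | split; [split | split; [split | ]]]]].
- move=> H [x y] [[r [j [Jj e]]] Hall]; case: e => ?? ; subst.
  exists r, j; do ?split => //.
  apply: H => a; have [b [k [pb [_ e]]]] := Hall a.
  by case: e => ??; subst.
- move=> H r Hr.
  have: prime_lift f J p (r, f r).
    apply: H; split; first by exists r, 0; rewrite addr0.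
    move=> a; exists r, 0; rewrite addr0; by split.
  by case=> b [k [pb [_ e]]]; case: e => ??; subst.
- move=> H [x y] [b [k [pb [Jk e]]]]; case: e => ??; subst.
  split; first by exists b, k.
  move=> a; exists b, k; split => //; exact: H.
- move=> H r pr a.
  have: prime_lift f J p (r, f r) by exists r, 0; rewrite addr0.
  move=> /H [_ /(_ a)] [b [k [pb [_ e]]]]; by case: e => ??; subst.
- move=> H [x y] [[r [j [Jj e]]] Hall]; case: e => ??; subst.
  exists r, j; do ?split => //.
  apply: H => a; have [b [k [_ [qb e]]]] := Hall a.
  case: e => e1 e2; by rewrite e2.
- move=> H s Hs.
  have Jsj : J (s * j0) by rewrite mulrC; exact: idM hJ Jj0.
  have: prime_bar f J q (0, f 0 + s * j0).
    apply: H; split; first by exists 0, (s * j0).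
    move=> a; exists 0, (s * j0); split => //; split => //.
    by rewrite rmorph0 add0r; apply: idM; [case: (hqs a) => -[]| apply: Hs].
  case=> b [k [_ [qb e]]]; case: e => eb ek; rewrite -ek rmorph0 add0r in qb.
  by case: (qpr _ _ qb).
- move=> H [x y] [r [j [Jj [qy e]]]]; case: e => ??; subst.
  split; first by exists r, j.
  move=> a; exists r, j; split => //; split => //; exact: H.
- move=> _ H s qs0 a.
  have [[hqa _ qapr] nJqa] := hqs a.
  have [ja [Jja nqja]] := nincl_ex nJqa.
  have Jsj : J (s * ja) by rewrite mulrC; exact: idM hJ Jja.
  have: prime_bar f J q (0, f 0 + s * ja).
    exists 0, (s * ja); split => //; split => //.
    by rewrite rmorph0 add0r; apply: idM.
  move=> /H [_ /(_ a)] [b [k [_ [qb e]]]]; case: e => eb ek.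
  rewrite -ek rmorph0 add0r in qb.
  by case: (qapr _ _ qb).
- move=> H r [a [b [Ha [Jb e]]]].
  have: prime_lift f J p (r, f r + - b).
    apply: H; split; first by exists r, (- b); split => //; exact: idN.
    move=> i; exists r, (- b); split; first exact: idN.
    by split => //; rewrite e addrK; apply: Ha.
  by case=> c [k [pc [_ e']]]; case: e' => ??; subst.
- move=> H [x y] [[r [j [Jj e]]] Hall]; case: e => ??; subst.
  exists r, j; do ?split => //.
  apply: H; exists (f r + j), (- j); split.
    move=> a; have [b [k [_ [qb e]]]] := Hall a; case: e => e1 e2; by rewrite e2.
  by split; [exact: idN | rewrite addrK].
- move=> H.
  have: amalg_bigcap f J (fun a => prime_lift f J (ps a)) (0, f 0 + j0).
    split; first by exists 0, j0.
    move=> a; exists 0, j0; do ?split => //; by case: (hps a) => -[].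
  move=> /H [b [k [_ [qb e]]]]; case: e => eb ek.
  by apply: nqj0; move: qb; rewrite -ek rmorph0 add0r.
Qed.
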